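(* Let $V$ be a finite elementary abelian $2$-group (a finite-dimensional $\mathbb F_2$-vector space) acting simply transitively by translations on a finite set $Q=a+V$, and let $\pi:Q\to X$ be a surjection which is support-equivariant, meaning that $\pi(q)=\pi(q')$ implies $\pi(q+v)=\pi(q'+v)$ for all $q,q'\in Q$ and $v\in V$. Then $|X|$ is a power of $2$. In particular, $|X|\neq 3$. *)

(* Defs.v *)
From HB Require Import structures.
From mathcomp Require Import all_boot all_order all_algebra.
Set Implicit Arguments. Unset Strict Implicit. Unset Printing Implicit Defensive.
Import GRing.Theory.
Local Open Scope ring_scope.

Definition is_action (V : zmodType) (Q : Type) (act : Q -> V -> Q) : Prop :=
  (forall q, act q 0 = q) /\ (forall q u v, act (act q u) v = act q (u + v)).

Definition simply_transitive (V : zmodType) (Q : Type) (act : Q -> V -> Q) : Prop :=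
  forall q q' : Q, exists! v : V, act q v = q'.

Definition support_equivariant (V : zmodType) (Q X : Type)
    (act : Q -> V -> Q) (pi : Q -> X) : Prop :=
  forall q q' : Q, forall v : V, pi q = pi q' -> pi (act q v) = pi (act q' v).

(* Main.v *)
Require Import Defs.
From HB Require Import structures.
From mathcomp Require Import all_boot all_order all_algebra.
From mathcomp Require Import all_fingroup all_solvable.
From mathcomp Require Import zify.
Import Defs.
Import GRing.Theory.
Local Open Scope ring_scope.

Lemma exp2_group (V : finZmodType) (hV2 : forall v : V, v + v = 0) :
  (2%N).-nat #|V|.
Proof.
Local Open Scope group_scope.
have : (2%N).-group [set: V]%g.
  apply/pgroupP => p pp pd.
  have [x _ ox] := Cauchy pp pd.
  have : (#[x] %| 2)%N by rewrite order_dvdn FinRing.zmodXgE GRing.mulr2n hV2.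
  by rewrite ox (dvdn_prime2 pp) // inE.
by rewrite /pgroup cardsT.
Qed.

Theorem proposition6p2 (V : finZmodType) (Q X : finType)
    (act : Q -> V -> Q) (a : Q) (pi : Q -> X)
    (hV2 : forall v : V, v + v = 0)
    (hact : is_action act)
    (hst : simply_transitive act)
    (hsurj : forall x : X, exists q : Q, pi q = x)
    (hsupp : support_equivariant act pi) :
  (exists k : nat, #|X| = (2 ^ k)%N) /\ #|X| <> 3%N.
Proof.
case: hact => act0 actD.
pose f v := pi (act a v).
have key u v : f u = f v <-> f (u + v) = f 0.
  rewrite /f act0; split => h.
    by rewrite -actD (hsupp _ _ v h) actD hV2 act0.
  by have := hsupp _ _ v h; rewrite !actD -addrA hV2 addr0.
pose F0 := [set w | f w == f 0].
have fib x : #|[set v | f v == x]| = #|F0|.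
  have [q <-] := hsurj x.
  have [v0 [hv0 _]] := hst a q.
  rewrite -hv0 -/(f v0).
  rewrite -(card_preimset F0 (addIr v0)).
  apply: eq_card => v; rewrite !inE; apply/eqP/eqP; [exact: (proj1 (key _ _)) | exact: (proj2 (key _ _))].
have cV : #|V| = (#|X| * #|F0|)%N.
  rewrite -sum_nat_const -[LHS]sum1_card (partition_big f predT) //=.
  apply: eq_bigr => x _.
  by rewrite sum1_card -(fib x); apply: eq_card => v; rewrite !inE.
have dX : (#|X| %| #|V|)%N by rewrite cV dvdn_mulr.
have [k hk] := p_natP (pnat_dvd dX (@exp2_group V hV2)).
split; first by exists k.
rewrite hk; case: k {hk} => [|k] //; rewrite expnS => /(congr1 odd); by rewrite oddM.
Qed.
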